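(* Let $q=p^r$ with $p$ prime, $p\ne 2$, $p\ne 3$. Let $$f_2(x_1,x_2)=t\bigl(x_1^{q-2}+x_2^{q-2}\bigr).$$ Then the polynomial $t\bigl(f_2(x_1,x_2)+x_3^{q-2}\bigr)\in\mathbb{F}_q[x_1,x_2,x_3]$, reduced modulo $x_j^q-x_j$, has degree $3(q-2)$.
   Context: $\mathbb{F}_q$ is the finite field with $q$ elements, and $$t(x)=x+\sum_{k=0}^{q-2}x^k\in\mathbb{F}_q[x];$$ this polynomial swaps $0$ and $1$ and fixes every other element. Degree means the total degree of the reduced representative (degree $<q$ in each variable). *)

(* Defs.v *)
From HB Require Import structures.
From mathcomp Require Import all_boot all_order all_algebra all_field.
From mathcomp Require Import mpoly.
Set Implicit Arguments. Unset Strict Implicit. Unset Printing Implicit Defensive.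
Import GRing.Theory.
Local Open Scope ring_scope.

Section Defs.
Variables (F : finFieldType) (n : nat).

Definition tpoly (g : {mpoly F[n]}) : {mpoly F[n]} :=
  g + \sum_(k < (#|F|).-1) g ^+ k.

(* Reduction of an exponent modulo x^q - x : x^0 = 1, and for e >= 1,
   x^e == x^(((e-1) mod (q-1)) + 1), which has exponent in 1..q-1. *)
Definition red_exp (e : nat) : nat :=
  if e == 0%N then 0%N else (((e.-1) %% (#|F|).-1).+1)%N.

Definition red_mnm (m : 'X_{1..n}) : 'X_{1..n} :=
  [multinom red_exp (m i) | i < n].

(* The reduced representative modulo the ideal (x_j^q - x_j)_j :
   each monomial is replaced by its reduced monomial (degree < q in each var). *)
Definition reduce (P : {mpoly F[n]}) : {mpoly F[n]} :=
  \sum_(m <- msupp P) P@_m *: 'X_[red_mnm m].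

Definition tdeg (P : {mpoly F[n]}) : nat := (msize P).-1.

End Defs.

(* Main.v *)
Require Import Defs.
From HB Require Import structures.
From mathcomp Require Import all_boot all_order all_algebra all_field.
From mathcomp Require Import mpoly.
From mathcomp Require Import zify ring.
Import GRing.Theory.
Local Open Scope ring_scope.
Set Implicit Arguments. Unset Strict Implicit. Unset Printing Implicit Defensive.

Section PowSums.
Variable F : finFieldType.
Local Notation q := #|F|.
Hypothesis hq : q%:R = 0 :> F.

Lemma q_gt1 : (1 < q)%N. Proof. exact: finNzRing_gt1. Qed.

Lemma expq1 (x : F) : x != 0 -> x ^+ q.-1 = 1.
Proof.
move=> x0; apply: (mulfI x0); rewrite mulr1 -exprS prednK ?expf_card //.
by apply: leq_trans q_gt1.
Qed.

Lemma sum_powq1 : \sum_(x : F) x ^+ q.-1 = -1.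
Proof.
rewrite (bigD1 0) //= expr0n /=.
have -> : (q.-1 == 0%N) = false by move: q_gt1; case: q => [|[]].
rewrite add0r (eq_bigr (fun _ => 1)); last by move=> x /expq1.
rewrite sumr_const cardC1.
have : (q.-1.+1)%:R = 0 :> F by rewrite prednK ?hq //; apply: leq_trans q_gt1.
by rewrite -addn1 natrD => /eqP; rewrite addr_eq0 => /eqP.
Qed.

Lemma sum_pow j : (j < q.-1)%N -> \sum_(x : F) x ^+ j = 0.
Proof.
case: j => [_|j hj].
  rewrite (eq_bigr (fun _ => 1)) // sumr_const; exact: hq.
have [l l0 lj] : exists2 l : F, l != 0 & l ^+ j.+1 != 1.
  apply/exists_inP; rewrite -negb_forall_in; apply/negP => /forall_inP H.
  have := @max_unity_roots F j.+1 (enum (predC1 (0:F))) isT.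
  have -> : all j.+1.-unity_root (enum (predC1 (0:F))).
    apply/allP => x; rewrite mem_enum => x0.
    by rewrite unity_rootE H.
  rewrite enum_uniq -cardE cardC1 => /(_ isT isT).
  by rewrite leqNgt hj.
have : \sum_(x : F) x ^+ j.+1 = l ^+ j.+1 * \sum_(x : F) x ^+ j.+1.
  rewrite {1}(reindex_inj (mulfI l0)) /= mulr_sumr.
  by apply: eq_bigr => x _; rewrite exprMn.
move/eqP; rewrite -subr_eq0 -{1}[\sum_x _]mul1r -mulrBl mulf_eq0 subr_eq0.
by rewrite eq_sym (negbTE lj) => /eqP.
Qed.

Lemma expq_red (x : F) e : (0 < e)%N -> x ^+ (e + q.-1) = x ^+ e.
Proof.
move=> e0; have [->|x0] := eqVneq x 0.
  by rewrite !expr0n addn_eq0 (negbTE (lt0n_neq0 e0)).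
by rewrite exprD expq1 // mulr1.
Qed.

Definition cc (k : nat) (x : F) : F :=
  if k == 0%N then 1 - x ^+ q.-1 else - x ^+ (q.-1 - k).

Lemma q1_gt0 : (0 < q.-1)%N.
Proof. by move: q_gt1; case: q => [|[]]. Qed.

Lemma orth j k : (j <= q.-1)%N -> (k <= q.-1)%N ->
  \sum_(x : F) x ^+ j * cc k x = (j == k)%:R.
Proof.
move=> hj hk; rewrite /cc; case: eqP => [->|/eqP k0].
  under eq_bigr => x _ do rewrite mulrBr mulr1 -exprD.
  rewrite sumrB; case: j hj => [|j] hj.
    by rewrite add0n sum_powq1 sum_pow ?q1_gt0 // sub0r opprK.
  rewrite [X in _ - X](eq_bigr (fun x => x ^+ j.+1)) ?subrr // => x _; exact: expq_red.
under eq_bigr => x _ do rewrite mulrN -exprD.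
rewrite sumrN; case: (ltngtP j k) => hjk.
- rewrite sum_pow ?oppr0 //.
  by move: q1_gt0 k0; rewrite -lt0n; lia.
- have -> : (j + (q.-1 - k) = (j - k) + q.-1)%N.
    by lia.
  under eq_bigr => x _ do rewrite expq_red ?subn_gt0 //.
  rewrite sum_pow ?oppr0 //.
  by move: k0; rewrite -lt0n; lia.
  rewrite hjk subnKC // sum_powq1 opprK. done.
Qed.

End PowSums.

Section Reduce.
Variable F : finFieldType.
Local Notation q := #|F|.
Hypothesis hq : q%:R = 0 :> F.

Lemma red_exp_le e : (red_exp F e <= q.-1)%N.
Proof.
rewrite /red_exp; case: eqP => // _.
by rewrite ltn_mod q1_gt0.
Qed.

Lemma pow_red (x : F) e : x ^+ red_exp F e = x ^+ e.
Proof.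
rewrite /red_exp; case: e => [//|e] /=.
rewrite {2}(divn_eq e q.-1) -addnS.
elim: (e %/ q.-1)%N => [|k IH]; first by rewrite mul0n add0n.
by rewrite mulSn -addnA addnC expq_red // addn_gt0 orbT.
Qed.

Lemma prod3 (f : 'I_3 -> F) :
  \prod_(i < 3) f i = f (inord 0) * f (inord 1) * f (inord 2).
Proof.
rewrite !big_ord_recl big_ord0 mulr1 mulrA.
by congr (f _ * f _ * f _); apply/val_inj; rewrite /= inordK.
Qed.

Lemma sum3 (f : 'I_3 -> nat) :
  (\sum_(i < 3) f i = f (inord 0) + f (inord 1) + f (inord 2))%N.
Proof.
rewrite !big_ord_recl big_ord0 addn0 addnA.
by congr (f _ + f _ + f _)%N; apply/val_inj; rewrite /= inordK.
Qed.

Lemma ord3P (i : 'I_3) : [\/ i = inord 0, i = inord 1 | i = inord 2].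
Proof.
case: i => [[|[|[|k]]] hk] //.
- by apply: Or31; apply/val_inj; rewrite /= inordK.
- by apply: Or32; apply/val_inj; rewrite /= inordK.
- by apply: Or33; apply/val_inj; rewrite /= inordK.
Qed.

Lemma eq_mnm3 (m m' : 'X_{1..3}) :
  (m == m') = [&& m (inord 0) == m' (inord 0), m (inord 1) == m' (inord 1)
                & m (inord 2) == m' (inord 2)].
Proof.
apply/eqP/and3P => [->|[/eqP e0 /eqP e1 /eqP e2]]; first by rewrite !eqxx.
by apply/mnmP => i; case: (ord3P i) => ->.
Qed.

Definition v3 (x y z : F) : 'I_3 -> F := fun i => nth 0 [:: x; y; z] i.

Lemma v3_0 x y z : v3 x y z (inord 0) = x. Proof. by rewrite /v3 inordK. Qed.
Lemma v3_1 x y z : v3 x y z (inord 1) = y. Proof. by rewrite /v3 inordK. Qed.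
Lemma v3_2 x y z : v3 x y z (inord 2) = z. Proof. by rewrite /v3 inordK. Qed.

Lemma sum3_factor (f g h : F -> F) :
  \sum_x \sum_y \sum_z (f x * g y * h z) =
  (\sum_x f x) * (\sum_y g y) * (\sum_z h z).
Proof.
rewrite big_distrl /= big_distrl /=; apply: eq_bigr => x _.
rewrite -mulrA big_distrl /= big_distrr /=; apply: eq_bigr => y _.
by rewrite mulrA big_distrr.
Qed.

Lemma exch3 (I : Type) (r : seq I) (a : I -> F -> F -> F -> F) :
  \sum_x \sum_y \sum_z \sum_(i <- r) a i x y z =
  \sum_(i <- r) \sum_x \sum_y \sum_z a i x y z.
Proof.
under eq_bigr => x _ do under eq_bigr => y _ do rewrite exchange_big.
under eq_bigr => x _ do rewrite exchange_big.
by rewrite exchange_big.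
Qed.

Lemma red_mnmE (m : 'X_{1..3}) i : red_mnm F m i = red_exp F (m i).
Proof. by rewrite /red_mnm mnmE. Qed.

Lemma meval_reduce (P : {mpoly F[3]}) v : (reduce P).@[v] = P.@[v].
Proof.
rewrite /reduce raddf_sum /= [RHS]mevalE; apply: eq_bigr => m _.
rewrite mevalZ mevalX; congr (_ * _); apply: eq_bigr => i _.
by rewrite red_mnmE pow_red.
Qed.

Lemma coef_reduce (P : {mpoly F[3]}) m :
  (reduce P)@_m = \sum_(m' <- msupp P) P@_m' * (red_mnm F m' == m)%:R.
Proof.
rewrite /reduce raddf_sum /=; apply: eq_bigr => m' _.
by rewrite mcoeffZ mcoeffX.
Qed.

Lemma supp_reduce (P : {mpoly F[3]}) m :
  m \in msupp (reduce P) -> forall i, (m i <= q.-1)%N.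
Proof.
move=> hm i; rewrite leqNgt; apply/negP => hi; move: hm.
rewrite mcoeff_msupp coef_reduce big1_seq ?eqxx // => m' _.
case: eqP => [hm'|]; last by rewrite mulr0.
by move: hi; rewrite -hm' red_mnmE ltnNge red_exp_le.
Qed.

Definition Lf (m : 'X_{1..3}) (Q : {mpoly F[3]}) : F :=
  \sum_x \sum_y \sum_z
    Q.@[v3 x y z] * (cc (m (inord 0)) x * cc (m (inord 1)) y * cc (m (inord 2)) z).

Lemma Lf_X (m mu : 'X_{1..3}) : (forall i, m i <= q.-1)%N -> (forall i, mu i <= q.-1)%N ->
  Lf m 'X_[mu] = (mu == m)%:R.
Proof.
move=> hm hmu; rewrite /Lf.
under eq_bigr => x _ do under eq_bigr => y _ do under eq_bigr => z _ do
  rewrite mevalX prod3 v3_0 v3_1 v3_2.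
apply: (@etrans _ _ ((\sum_x x ^+ mu (inord 0) * cc (m (inord 0)) x) *
   (\sum_y y ^+ mu (inord 1) * cc (m (inord 1)) y) *
   (\sum_z z ^+ mu (inord 2) * cc (m (inord 2)) z))); last first.
  by rewrite !orth // eq_mnm3 -!natrM !mulnb andbA.
rewrite -sum3_factor.
apply: eq_bigr => x _; apply: eq_bigr => y _; apply: eq_bigr => z _.
ring.
Qed.

Lemma meval_red_expand (P : {mpoly F[3]}) v :
  P.@[v] = \sum_(m' <- msupp P) P@_m' * ('X_[red_mnm F m']).@[v].
Proof.
rewrite -meval_reduce /reduce raddf_sum /=; apply: eq_bigr => m' _.
by rewrite mevalZ.
Qed.

Lemma coef_formula (P : {mpoly F[3]}) (m : 'X_{1..3}) : (forall i, m i <= q.-1)%N ->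
  (reduce P)@_m = Lf m P.
Proof.
move=> hm; rewrite coef_reduce /Lf; symmetry.
under eq_bigr => x _ do under eq_bigr => y _ do under eq_bigr => z _ do
  rewrite meval_red_expand big_distrl /=.
rewrite exch3; apply: eq_bigr => m' _.
rewrite -Lf_X //; last by move=> i; rewrite red_mnmE red_exp_le.
rewrite /Lf big_distrr; apply: eq_bigr => x _.
rewrite big_distrr; apply: eq_bigr => y _.
rewrite big_distrr; apply: eq_bigr => z _.
by rewrite /= mulrA.
Qed.


End Reduce.

Section Sums.
Variable F : finFieldType.
Local Notation q := #|F|.
Hypothesis hq : q%:R = 0 :> F.
Hypothesis q5 : (5 <= q)%N.

Definition tF (w : F) : F := w + \sum_(k < q.-1) w ^+ k.

Lemma tF0 : tF 0 = 1.
Proof.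
rewrite /tF add0r -(prednK (q1_gt0 F)) big_ord_recl expr0 big1 ?addr0 // => i _.
by rewrite expr0n.
Qed.

Lemma tF1 : tF 1 = 0.
Proof.
rewrite /tF (eq_bigr (fun _ => 1)) => [|i _]; last by rewrite expr1n.
rewrite sumr_const card_ord.
have : (q.-1.+1)%:R = 0 :> F by rewrite prednK ?hq // ; apply: ltnW; exact: q_gt1.
by move=> h; rewrite -[RHS]h -addn1 natrD addrC.
Qed.

Lemma tFE w : w != 0 -> w != 1 -> tF w = w.
Proof.
move=> w0 w1; rewrite /tF.
suff -> : \sum_(k < q.-1) w ^+ k = 0 by rewrite addr0.
have : (w - 1) * \sum_(k < q.-1) w ^+ k = 0 by rewrite -subrX1 expq1 // subrr.
by move/eqP; rewrite mulf_eq0 subr_eq0 (negbTE w1) => /eqP.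
Qed.

Lemma tF_ind w : tF w = w + (w == 0)%:R - (w == 1)%:R.
Proof.
have [->|w0] := eqVneq w 0; first by rewrite tF0 eq_sym oner_eq0 subr0 add0r.
have [->|w1] := eqVneq w 1; first by rewrite tF1 addr0 subrr.
by rewrite tFE // addr0 subr0.
Qed.

Lemma sum_inv (f : F -> F) : \sum_x f x^-1 = \sum_x f x.
Proof. by rewrite [RHS](reindex_inj invr_inj). Qed.

Lemma sum_shift (c : F) (f : F -> F) : \sum_x f (c + x) = \sum_x f x.
Proof. by rewrite [RHS](reindex_inj (addrI c)). Qed.

Lemma sum_shiftN (c : F) (f : F -> F) : \sum_x f (c - x) = \sum_x f x.
Proof.
have inj : injective (fun x : F => c - x).
  by move=> u w /addrI /oppr_inj.
by rewrite [RHS](reindex_inj inj).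
Qed.

Lemma sum_delta (c k : F) : \sum_x k * (x == c)%:R = k.
Proof.
rewrite (bigD1 c) //= eqxx mulr1 big1 ?addr0 // => x /negbTE ->.
by rewrite mulr0.
Qed.

Lemma sum_invX j : (j < q.-1)%N -> \sum_(x : F) x^-1 ^+ j = 0.
Proof. by move=> hj; rewrite (sum_inv (fun x => x ^+ j)) sum_pow. Qed.

Definition HH (G : F -> F) x y z := G (G (x^-1 + y^-1) + z^-1).

Lemma van_d2 G d0 d1 : (d0 < q.-1)%N ->
  \sum_x \sum_y \sum_z HH G x y z * (x ^+ d0 * y ^+ d1 * z ^+ 0) = 0.
Proof.
move=> hd0.
have E x y : \sum_z HH G x y z * (x ^+ d0 * y ^+ d1 * z ^+ 0) =
             x ^+ d0 * (y ^+ d1 * \sum_w G w).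
  under eq_bigr => z _ do rewrite expr0 mulr1.
  rewrite -big_distrl /= mulrC mulrA; congr (_ * _).
  rewrite /HH (sum_inv (fun w => G (G (x^-1 + y^-1) + w))).
  by rewrite (sum_shift _ G).
under eq_bigr => x _ do under eq_bigr => y _ do rewrite E.
under eq_bigr => x _ do rewrite -big_distrr /=.
by rewrite -big_distrl /= sum_pow // mul0r.
Qed.

Lemma van_d0 G d1 d2 : (d1 < q.-1)%N ->
  \sum_x \sum_y \sum_z HH G x y z * (x ^+ 0 * y ^+ d1 * z ^+ d2) = 0.
Proof.
move=> hd1; rewrite exchange_big /=.
under eq_bigr => y _ do rewrite exchange_big /=.
have E y z : \sum_x HH G x y z * (x ^+ 0 * y ^+ d1 * z ^+ d2) =
             y ^+ d1 * (z ^+ d2 * \sum_w G (G w + z^-1)).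
  under eq_bigr => x _ do rewrite expr0 mul1r.
  rewrite -big_distrl /= [RHS]mulrA [RHS]mulrC; congr (_ * _).
  rewrite /HH (sum_inv (fun w => G (G (w + y^-1) + z^-1))).
  rewrite -(sum_shift (y^-1) (fun w => G (G w + z^-1))); apply: eq_bigr => x _.
  by rewrite [x + _]addrC.
under eq_bigr => y _ do under eq_bigr => z _ do rewrite E.
under eq_bigr => y _ do rewrite -big_distrr /=.
by rewrite -big_distrl /= sum_pow // mul0r.
Qed.

Lemma van_d1 G d0 d2 : (d0 < q.-1)%N ->
  \sum_x \sum_y \sum_z HH G x y z * (x ^+ d0 * y ^+ 0 * z ^+ d2) = 0.
Proof.
move=> hd0; rewrite exchange_big /= -[RHS](van_d0 G d2 hd0).
apply: eq_bigr => y _; apply: eq_bigr => x _; apply: eq_bigr => z _.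
by rewrite /HH [x^-1 + _]addrC [y ^+ 0 * _]mulrC.
Qed.

Lemma q1_gt3 : (3 < q.-1)%N.
Proof. by move: q5; case: q => [|[|[|[|[|k]]]]]. Qed.

Lemma sum_inv1 : \sum_(x : F) x^-1 = 0.
Proof.
rewrite -[RHS](@sum_invX 1); last by apply: leq_trans q1_gt3.
by apply: eq_bigr => x _; rewrite expr1.
Qed.

Lemma delta_swap (f : F -> F) c a : f c * (c == a)%:R = f a * (c == a)%:R.
Proof. by have [->|_] := eqVneq c a; rewrite ?mulr0. Qed.

Lemma invmul_pow (c : F) : c^-1 * c = c ^+ q.-1.
Proof.
have [->|c0] := eqVneq c 0; first by rewrite invr0 mul0r expr0n gtn_eqF ?q1_gt0.
by rewrite mulVf // expq1.
Qed.

Lemma innerJ s : \sum_c c^-1 * tF (s + c) = -1 - s^-1 - (1 - s)^-1.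
Proof.
have E c : c^-1 * tF (s + c) = s * c^-1 + c ^+ q.-1 +
   ((- s)^-1 * (c == - s)%:R - (1 - s)^-1 * (c == 1 - s)%:R).
  rewrite tF_ind.
  have -> : (s + c == 0) = (c == - s).
    by apply/eqP/eqP => h; [apply: (addrI s); rewrite h; ring | rewrite h; ring].
  have -> : (s + c == 1) = (c == 1 - s).
    by apply/eqP/eqP => h; [apply: (addrI s); rewrite h; ring | rewrite h; ring].
  rewrite -(delta_swap GRing.inv c (- s)) -(delta_swap GRing.inv c (1 - s)).
  rewrite -invmul_pow; ring.
rewrite (eq_bigr _ (fun c _ => E c)) !big_split /= sumrN !sum_delta -big_distrr /=.
by rewrite sum_inv1 (sum_powq1 hq) invrN; ring.
Qed.

Lemma W_tF s : (tF s)^-1 + (1 - tF s)^-1 = s^-1 + (1 - s)^-1.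
Proof.
have [->|s0] := eqVneq s 0.
  by rewrite tF0 subrr subr0 invr0 invr1 addr0 add0r.
have [->|s1] := eqVneq s 1.
  by rewrite tF1 subrr subr0 invr0 invr1 addr0 add0r.
by rewrite tFE.
Qed.

Lemma N0 : \sum_(a : F) \sum_(b : F) a^-1 * b^-1 * (a + b)^-1 = 0.
Proof.
pose K0 := \sum_(t : F) t^-1 * (1 + t)^-1.
have E a : \sum_(b : F) a^-1 * b^-1 * (a + b)^-1 = a^-1 ^+ 3 * K0.
  have [->|a0] := eqVneq a 0.
    by rewrite invr0 expr0n mul0r big1 // => b _; rewrite !mul0r.
  rewrite (reindex_inj (mulfI a0)) /= /K0 big_distrr /=; apply: eq_bigr => t _.
  have -> : a + a * t = a * (1 + t) by ring.
  by rewrite !invfM; ring.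
rewrite (eq_bigr _ (fun a _ => E a)) -big_distrl /= sum_invX ?mul0r //.
by apply: leq_trans q1_gt3.
Qed.

Lemma inner1 c0 : \sum_(b : F) b^-1 * (c0 - b)^-1 = - 2%:R * (c0^-1 * c0^-1).
Proof.
have [->|c0n] := eqVneq c0 0.
  rewrite invr0 !mulr0 -[RHS]oppr0 -[X in _ = - X](@sum_invX 2); last by apply: leq_trans q1_gt3.
  rewrite -sumrN; apply: eq_bigr => b _; rewrite sub0r invrN; ring.
have E b : b^-1 * (c0 - b)^-1 = c0^-1 * b^-1 + c0^-1 * (c0 - b)^-1
   - c0^-1 * c0^-1 * (b == 0)%:R - c0^-1 * c0^-1 * (b == c0)%:R.
  have [->|b0] := eqVneq b 0.
    by rewrite eq_sym (negbTE c0n) invr0 subr0 /=; ring.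
  have [->|bc] := eqVneq b c0.
    by rewrite subrr invr0 /=; ring.
  have cb : c0 - b != 0 by rewrite subr_eq0 eq_sym.
  by rewrite /=; field; rewrite c0n b0 cb.
rewrite (eq_bigr _ (fun b _ => E b)) !sumrB !big_split /= !sum_delta -!big_distrr /=.
rewrite (sum_shiftN c0 GRing.inv) sum_inv1; ring.
Qed.

Lemma sumA : \sum_(a : F) a^-1 * ((1 - a)^-1 * (1 - a)^-1) = - 3%:R.
Proof.
have E (a : F) : a^-1 * ((1 - a)^-1 * (1 - a)^-1) = a^-1 + (1 - a)^-1 +
   (1 - a)^-1 * (1 - a)^-1 - 2%:R * (a == 0)%:R - 1 * (a == 1)%:R.
  have [->|a0] := eqVneq a 0.
    by rewrite eq_sym oner_eq0 invr0 subr0 invr1 /=; ring.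
  have [->|a1] := eqVneq a 1.
    by rewrite subrr invr0 invr1 /=; ring.
  have ca : 1 - a != 0 by rewrite subr_eq0 eq_sym.
  by rewrite /=; field; rewrite a0 ca.
rewrite (eq_bigr _ (fun a _ => E a)) !sumrB !big_split /= !sum_delta.
rewrite (sum_shiftN 1 GRing.inv) (sum_shiftN 1 (fun x => x^-1 * x^-1)).
rewrite sum_inv1 (eq_bigr (fun x => x^-1 ^+ 2)) ?sum_invX; last by move=> x _; rewrite expr2.
  by ring.
by apply: leq_trans q1_gt3.
Qed.

Lemma N1 : \sum_(a : F) \sum_(b : F) a^-1 * b^-1 * (1 - (a + b))^-1 = 6%:R.
Proof.
have E a : \sum_(b : F) a^-1 * b^-1 * (1 - (a + b))^-1 =
           a^-1 * (- 2%:R * ((1 - a)^-1 * (1 - a)^-1)).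
  rewrite -inner1 big_distrr /=; apply: eq_bigr => b _.
  have -> : 1 - (a + b) = (1 - a) - b by ring.
  by ring.
rewrite (eq_bigr _ (fun a _ => E a)).
under eq_bigr => a _ do rewrite mulrCA.
by rewrite -big_distrr /= sumA; ring.
Qed.

Lemma T111 : \sum_x \sum_y \sum_z tF (tF (x^-1 + y^-1) + z^-1) * (x * y * z) = - 6%:R.
Proof.
rewrite (reindex_inj invr_inj) /=.
under eq_bigr => x _ do rewrite (reindex_inj invr_inj) /=.
under eq_bigr => x _ do under eq_bigr => y _ do rewrite (reindex_inj invr_inj) /=.
have E x y : \sum_z tF (tF (x^-1^-1 + y^-1^-1) + z^-1^-1) * (x^-1 * y^-1 * z^-1) =
   - (x^-1 * y^-1) - x^-1 * y^-1 * (x + y)^-1 - x^-1 * y^-1 * (1 - (x + y))^-1.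
  rewrite !invrK.
  have -> : - (x^-1 * y^-1) - x^-1 * y^-1 * (x + y)^-1 - x^-1 * y^-1 * (1 - (x + y))^-1
     = x^-1 * y^-1 * (-1 - (tF (x + y))^-1 - (1 - tF (x + y))^-1).
    rewrite (_ : -1 - (tF (x + y))^-1 - (1 - tF (x + y))^-1 =
                 -1 - ((tF (x + y))^-1 + (1 - tF (x + y))^-1)); last by ring.
    by rewrite W_tF; ring.
  rewrite -innerJ big_distrr /=; apply: eq_bigr => z _; rewrite invrK; ring.
under eq_bigr => x _ do under eq_bigr => y _ do rewrite E.
under eq_bigr => x _ do rewrite !sumrB sumrN -big_distrr /= sum_inv1 mulr0 oppr0 sub0r.
by rewrite sumrB sumrN N0 N1; ring.
Qed.

End Sums.

Lemma meval_tpoly (F : finFieldType) n (g : {mpoly F[n]}) v :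
  (tpoly g).@[v] = tF (g.@[v]).
Proof.
rewrite /tpoly /tF rmorphD rmorph_sum /=; congr (_ + _).
by apply: eq_bigr => k _; rewrite rmorphXn.
Qed.

Lemma pow_qm2 (F : finFieldType) (x : F) : (3 <= #|F|)%N -> x ^+ (#|F| - 2) = x^-1.
Proof.
move=> q3; have [->|x0] := eqVneq x 0.
  by rewrite invr0 expr0n; case: #|F| q3 => [|[|[|k]]].
apply: (mulfI x0); rewrite divff // -exprS.
have -> : (#|F| - 2).+1 = #|F|.-1 by lia.
by rewrite expq1.
Qed.

Section Arith.
Local Open Scope nat_scope.
Lemma arith (q a b c : nat) : (5 <= q)%N -> (a <= q.-1)%N -> (b <= q.-1)%N -> (c <= q.-1)%N ->
  (3 * (q - 2) < a + b + c)%N ->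
  [/\ a != 0%N, b != 0%N, c != 0%N, [/\ (q.-1 - a < q.-1)%N, (q.-1 - b < q.-1)%N &
     (q.-1 - c < q.-1)%N] & [\/ q.-1 - a = 0%N, q.-1 - b = 0%N | q.-1 - c = 0%N]].
Proof.
move=> *; split; try lia; first by split; lia.
have : (q.-1 - a = 0 \/ q.-1 - b = 0 \/ q.-1 - c = 0)%N by lia.
by case=> [|[]] ?; [apply: Or31 | apply: Or32 | apply: Or33].
Qed.
End Arith.


Unset Implicit Arguments.
Theorem mainTheorem15 (F : finFieldType) (p r : nat) :
  prime p -> p != 2%N -> p != 3%N -> #|F| = (p ^ r)%N ->
  let q := #|F| in
  let x1 : {mpoly F[3]} := 'X_(inord 0) in
  let x2 : {mpoly F[3]} := 'X_(inord 1) in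
  let x3 : {mpoly F[3]} := 'X_(inord 2) in
  let f2 := tpoly (x1 ^+ (q - 2) + x2 ^+ (q - 2)) in
  let P := reduce (tpoly (f2 + x3 ^+ (q - 2))) in
  P != 0 /\ tdeg P = (3 * (q - 2))%N.
Proof.
move=> hp hp2 hp3 hcard q x1 x2 x3 f2 P.
have hchar := card_finPcharP hcard hp.
have q1 := q_gt1 F.
have r0 : (0 < r)%N by move: q1; rewrite hcard; case: (r) => //; rewrite expn0.
have p5 : (5 <= p)%N.
  by clear hcard hchar; move: hp hp2 hp3; case: p => [|[|[|[|[|k]]]]].
have q5 : (5 <= #|F|)%N.
  rewrite hcard -(prednK r0) expnS; apply: leq_trans p5 _.
  by apply: leq_pmulr; rewrite expn_gt0 prime_gt0.
have hq : #|F|%:R = 0 :> F.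
  apply/eqP; rewrite -(dvdn_pcharf hchar) hcard.
  by rewrite -(prednK r0) expnS dvdn_mulr.
have h6 : 6%:R != 0 :> F.
  rewrite -(dvdn_pcharf hchar); apply/negP => hd; have := @dvdn_leq p 6 isT hd.
  by clear hcard hchar p5; move: hp hp2 hp3 hd; case: p => [|[|[|[|[|[|[|k]]]]]]].
have ev x y z : (tpoly (f2 + x3 ^+ (q - 2))).@[v3 x y z] = tF (tF (x^-1 + y^-1) + z^-1).
  rewrite /f2 meval_tpoly rmorphD /= meval_tpoly !rmorphD !rmorphXn /x1 /x2 /x3 /= !mevalXU v3_0 v3_1 v3_2.
  by rewrite !pow_qm2 //; move: q5; rewrite /q; lia.
have ccd k (x : F) : k != 0%N -> cc k x = - x ^+ (q.-1 - k).
  by rewrite /cc => /negbTE ->.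
pose m0 : 'X_{1..3} := [multinom (q - 2)%N | i < 3].
have cm0 : P@_m0 = 6%:R.
  rewrite /P (coef_formula hq); last by move=> i; rewrite mnmE; lia.
  rewrite /Lf.
  have hk : (q - 2 != 0)%N by lia.
  have hk1 : (q.-1 - (q - 2) = 1)%N by lia.
  have E x y z : (tpoly (f2 + x3 ^+ (q - 2))).@[v3 x y z] *
     (cc (m0 (inord 0)) x * cc (m0 (inord 1)) y * cc (m0 (inord 2)) z) =
      - (tF (tF (x^-1 + y^-1) + z^-1) * (x * y * z)).
    by rewrite ev !mnmE !ccd // hk1 !expr1; ring.
  under eq_bigr => x _ do under eq_bigr => y _ do under eq_bigr => z _ do rewrite E.
  under eq_bigr => x _ do under eq_bigr => y _ do rewrite sumrN.
  under eq_bigr => x _ do rewrite sumrN.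
  by rewrite sumrN (T111 hq q5) opprK.
have hm0 : m0 \in msupp P by rewrite mcoeff_msupp cm0.
have mdeg3 (m : 'X_{1..3}) : mdeg m = (m (inord 0) + m (inord 1) + m (inord 2))%N.
  by rewrite mdegE sum3.
have big (m : 'X_{1..3}) : m \in msupp P -> (mdeg m <= 3 * (q - 2))%N.
  move=> hin; have hm := supp_reduce hin.
  rewrite leqNgt; apply/negP => hbig; move: hin.
  rewrite mcoeff_msupp (coef_formula hq) // /Lf.
  rewrite mdeg3 in hbig.
  have [a0 b0 c0 [da db dc] hor] := arith q5 (hm _) (hm _) (hm _) hbig.
  have E x y z : (tpoly (f2 + x3 ^+ (q - 2))).@[v3 x y z] *
     (cc (m (inord 0)) x * cc (m (inord 1)) y * cc (m (inord 2)) z) =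
     - (HH (@tF F) x y z * (x ^+ (q.-1 - m (inord 0)) *
         y ^+ (q.-1 - m (inord 1)) * z ^+ (q.-1 - m (inord 2)))).
    by rewrite ev (ccd _ x a0) (ccd _ y b0) (ccd _ z c0) /HH; ring.
  under eq_bigr => x _ do under eq_bigr => y _ do under eq_bigr => z _ do rewrite E.
  under eq_bigr => x _ do under eq_bigr => y _ do rewrite sumrN.
  under eq_bigr => x _ do rewrite sumrN.
  rewrite sumrN oppr_eq0.
  case: hor => ->; first by rewrite (van_d0 hq) ?eqxx.
    by rewrite (van_d1 hq) ?eqxx.
  by rewrite (van_d2 hq) ?eqxx.
split.
  by apply/negP => /eqP hP; move: hm0; rewrite mcoeff_msupp hP raddf0 eqxx.
have le : (msize P <= (3 * (q - 2)).+1)%N.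
  by rewrite msizeE; apply/bigmax_leqP_seq => m hin _; rewrite ltnS big.
have ge := msize_mdeg_lt hm0.
rewrite mdeg3 !mnmE in ge.
rewrite /tdeg; lia.
Qed.
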